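(* Let $W$ be a Coxeter group, $w\in W$, $J\subseteq S$, and suppose $w=w^Jw_J$ is a Billey--Postnikov decomposition with $\supp(w^J)\cap\supp(w_J)=\{s\}$ for some $s\in S$. Then the middle multiplication map $\phi:x\mapsto x^J\,s\,x_J$ is a special matching of (the Hasse diagram of) the Bruhat interval $[e,w]$.
   Context: $(W,S)$ is a Coxeter system with length $\ell$, Bruhat order $\le$, identity $e$. For $J\subseteq S$, each $x$ factors uniquely as $x=x^Jx_J$ with $x_J\in W_J=\langle J\rangle$ and $x^J$ the minimal-length element of $xW_J$. $\supp(x)$ is the set of simple generators in a reduced word of $x$, $D_L(x)=\{s\in S:\ell(sx)<\ell(x)\}$. $w=w^Jw_J$ is a BP-decomposition if $\supp(w^J)\cap J\subseteq D_L(w_J)$. The Hasse diagram of a poset $P$ is the graph on $P$ whose edges are cover relations $x\lessdot y$; a perfect matching is a fixed-point-free involution $M$ with each $\{x,M(x)\}$ an edge; it is a special matching if for every cover $x\lessdot y$ either $M(x)=y$ or $M(x)<M(y)$. *)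

(* Defs.v *)
From Stdlib Require Import List Arith Relations ClassicalEpsilon.
Import ListNotations.
Set Implicit Arguments.

Record gen_group := GenGroup {
  carrier :> Type;
  mul : carrier -> carrier -> carrier;
  one : carrier;
  inv : carrier -> carrier;
  mulA : forall x y z, mul x (mul y z) = mul (mul x y) z;
  mul1g : forall x, mul one x = x;
  mulVg : forall x, mul (inv x) x = one;
  simple : carrier -> Prop
}.

Arguments simple : clear implicits.
Arguments one : clear implicits.
Arguments mul {_}.
Arguments inv {_}.

Section Coxeter.
Variable G : gen_group.

Definition gprod (l : list G) : G := fold_right (@mul G) (one G) l.
Definition sword (l : list G) : Prop := Forall (simple G) l.

Definition length_is (x : G) (n : nat) : Prop :=
  (exists l, sword l /\ gprod l = x /\ List.length l = n) /\
  (forall l, sword l -> gprod l = x -> n <= List.length l).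

Definition ell (x : G) : nat := epsilon (inhabits 0) (length_is x).

Definition delete_at (i : nat) (l : list G) : list G := firstn i l ++ skipn (Datatypes.S i) l.

(* (W,S) is a Coxeter system: S consists of involutions (distinct from e),
   generates W, and the Exchange Property holds (Björner–Brenti Thm 1.5.1). *)
Definition coxeter_system : Prop :=
  (forall s, simple G s -> mul s s = one G /\ s <> one G) /\
  (forall x : G, exists l, sword l /\ gprod l = x) /\
  (forall (l : list G) (s : G), sword l -> List.length l = ell (gprod l) ->
     simple G s -> ell (mul s (gprod l)) <= List.length l ->
     exists i, i < List.length l /\ mul s (gprod l) = gprod (delete_at i l)).

Definition reflection (t : G) : Prop :=
  exists w s, simple G s /\ t = mul (mul w s) (inv w).

Definition bruhat_step (x y : G) : Prop :=
  exists t, reflection t /\ y = mul x t /\ ell x < ell y.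
Definition bruhat_le : G -> G -> Prop := clos_refl_trans G bruhat_step.
Definition bruhat_lt (x y : G) : Prop := bruhat_le x y /\ x <> y.

Definition inWJ (J : G -> Prop) (x : G) : Prop :=
  exists l, Forall J l /\ gprod l = x.

Definition min_coset_rep (J : G -> Prop) (x y : G) : Prop :=
  inWJ J (mul (inv y) x) /\
  (forall z, inWJ J (mul (inv z) x) -> ell y <= ell z).

Definition upJ (J : G -> Prop) (x : G) : G :=
  epsilon (inhabits (one G)) (min_coset_rep J x).
Definition downJ (J : G -> Prop) (x : G) : G := mul (inv (upJ J x)) x.

Definition supp (x : G) (s : G) : Prop :=
  exists l, sword l /\ gprod l = x /\ List.length l = ell x /\ In s l.

Definition DL (x : G) (s : G) : Prop := simple G s /\ ell (mul s x) < ell x.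

Definition BP_decomposition (J : G -> Prop) (w : G) : Prop :=
  forall s, supp (upJ J w) s -> J s -> DL (downJ J w) s.

Definition interval (u v x : G) : Prop := bruhat_le u x /\ bruhat_le x v.

Definition covers_in (P : G -> Prop) (x y : G) : Prop :=
  P x /\ P y /\ bruhat_lt x y /\
  ~ (exists z, P z /\ bruhat_lt x z /\ bruhat_lt z y).

Definition special_matching (P : G -> Prop) (M : G -> G) : Prop :=
  (forall x, P x -> P (M x)) /\
  (forall x, P x -> M (M x) = x) /\
  (forall x, P x -> M x <> x) /\
  (forall x, P x -> covers_in P x (M x) \/ covers_in P (M x) x) /\
  (forall x y, covers_in P x y -> M x = y \/ bruhat_lt (M x) (M y)).

Definition middle_mult (J : G -> Prop) (s x : G) : G :=
  mul (mul (upJ J x) s) (downJ J x).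

End Coxeter.

(* Main.v *)
Require Import Defs.
From Stdlib Require Import List Arith Lia Relations Classical ClassicalEpsilon.
Import ListNotations.
Set Implicit Arguments.
Unset Strict Implicit.


Lemma gA {G : gen_group} (x y z : G) : mul x (mul y z) = mul (mul x y) z.
Proof. apply mulA. Qed.
Lemma g1 {G : gen_group} (x : G) : mul (one G) x = x.
Proof. apply mul1g. Qed.
Lemma gV {G : gen_group} (x : G) : mul (inv x) x = one G.
Proof. apply mulVg. Qed.

Section Basics.
Variable G : gen_group.
Local Notation "x ** y" := (@mul G x y) (at level 40, left associativity).

Lemma mulgV (x : G) : x ** inv x = one G.
Proof.
  rewrite <- (g1 (x ** inv x)).
  rewrite <- (gV (inv x)) at 1.
  rewrite <- gA. rewrite (gA (inv x) x (inv x)), gV, g1. apply gV.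
Qed.

Lemma mulg1 (x : G) : x ** one G = x.
Proof. rewrite <- (gV x), gA, mulgV. apply g1. Qed.

Lemma mulKg (x y : G) : inv x ** (x ** y) = y.
Proof. rewrite gA, gV; apply g1. Qed.
Lemma mulKVg (x y : G) : x ** (inv x ** y) = y.
Proof. rewrite gA, mulgV; apply g1. Qed.
Lemma mulgK (x y : G) : (y ** x) ** inv x = y.
Proof. rewrite <- gA, mulgV; apply mulg1. Qed.
Lemma mulgKV (x y : G) : (y ** inv x) ** x = y.
Proof. rewrite <- gA, gV; apply mulg1. Qed.

Lemma mulg_cancel_l (x y z : G) : x ** y = x ** z -> y = z.
Proof. intro H. rewrite <- (mulKg x y), H. apply mulKg. Qed.
Lemma mulg_cancel_r (x y z : G) : y ** x = z ** x -> y = z.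
Proof. intro H. rewrite <- (mulgK x y), H. apply mulgK. Qed.

Lemma inv_uniq (x y : G) : x ** y = one G -> inv x = y.
Proof. intro H. apply (mulg_cancel_l (x:=x)). rewrite mulgV; auto. Qed.

Lemma invK (x : G) : inv (inv x) = x.
Proof. apply inv_uniq. apply gV. Qed.

Lemma invM (x y : G) : inv (x ** y) = inv y ** inv x.
Proof. apply inv_uniq. rewrite gA, <- (gA x y), mulgV, mulg1, mulgV; auto. Qed.

Lemma inv1 : inv (one G) = one G.
Proof. apply inv_uniq. apply g1. Qed.

Lemma gprod_app (l1 l2 : list G) : gprod G (l1 ++ l2) = gprod G l1 ** gprod G l2.
Proof.
  induction l1; simpl. now rewrite g1. rewrite IHl1. apply gA.
Qed.

Lemma gprod_cons (a : G) l : gprod G (a :: l) = a ** gprod G l.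
Proof. reflexivity. Qed.

Lemma sword_app (l1 l2 : list G) : sword G l1 -> sword G l2 -> sword G (l1 ++ l2).
Proof. unfold sword; intros; apply Forall_app; auto. Qed.

Lemma sword_app_inv (l1 l2 : list G) : sword G (l1 ++ l2) -> sword G l1 /\ sword G l2.
Proof. unfold sword; intros; apply Forall_app; auto. Qed.

Lemma Forall_app_inv' (P : G -> Prop) (l1 l2 : list G) : Forall P (l1 ++ l2) -> Forall P l1 /\ Forall P l2.
Proof. intros; apply Forall_app; auto. Qed.

Lemma nat_least (P : nat -> Prop) : (exists n, P n) -> exists n, P n /\ forall m, P m -> n <= m.
Proof.
  intros [n Hn].
  revert Hn. induction n as [n IH] using (well_founded_induction lt_wf).
  intro Hn.
  destruct (classic (exists m, P m /\ m < n)) as [[m [Hm Hmn]] | Hno].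
  - exact (IH m Hmn Hm).
  - exists n; split; auto. intros m Hm. destruct (le_lt_dec n m); auto.
    exfalso; apply Hno; eauto.
Qed.

End Basics.

Section Cox.
Variable G : gen_group.
Hypothesis HG : coxeter_system G.
Local Notation "x ** y" := (@mul G x y) (at level 40, left associativity).

Lemma simple_inv (s : G) : simple G s -> s ** s = one G.
Proof. intro H. destruct HG as [H1 _]. apply H1; auto. Qed.
Lemma simple_ne (s : G) : simple G s -> s <> one G.
Proof. intro H. destruct HG as [H1 _]. apply H1; auto. Qed.
Lemma simple_invE (s : G) : simple G s -> inv s = s.
Proof. intro H. apply inv_uniq. apply simple_inv; auto. Qed.

Lemma length_exists (x : G) : exists n, length_is G x n.
Proof.
  destruct HG as [_ [Hgen _]].
  destruct (@nat_least (fun n => exists l, sword G l /\ gprod G l = x /\ length l = n)) as [n [[l [H1 [H2 H3]]] Hmin]].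
  { destruct (Hgen x) as [l [H1 H2]]. eauto. }
  exists n. split. eauto. intros l' H1' H2'. apply Hmin. eauto.
Qed.

Lemma ell_spec (x : G) : length_is G x (ell G x).
Proof. unfold ell. apply epsilon_spec. apply length_exists. Qed.

Lemma ell_le (l : list G) : sword G l -> ell G (gprod G l) <= length l.
Proof. intro H. destruct (ell_spec (gprod G l)) as [_ H2]. apply H2; auto. Qed.

Lemma ell_word (x : G) : exists l, sword G l /\ gprod G l = x /\ length l = ell G x.
Proof. destruct (ell_spec x) as [H _]; auto. Qed.

Lemma ell_one : ell G (one G) = 0.
Proof. pose proof (ell_le (l := []) (Forall_nil _)). simpl in H. lia. Qed.

Lemma ell0 (x : G) : ell G x = 0 -> x = one G.
Proof.
  intro H. destruct (ell_word x) as [l [_ [H2 H3]]]. rewrite H in H3.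
  destruct l; simpl in *; try discriminate. auto.
Qed.

Lemma ell_mul (x y : G) : ell G (x ** y) <= ell G x + ell G y.
Proof.
  destruct (ell_word x) as [l1 [A1 [B1 C1]]]. destruct (ell_word y) as [l2 [A2 [B2 C2]]].
  pose proof (ell_le (sword_app A1 A2)). rewrite gprod_app, B1, B2, length_app in H. lia.
Qed.

Lemma gprod_rev (l : list G) : sword G l -> gprod G (rev l) = inv (gprod G l).
Proof.
  induction 1; simpl. now rewrite inv1.
  rewrite gprod_app, IHForall, invM. simpl. rewrite mulg1, (simple_invE H); auto.
Qed.

Lemma sword_rev (l : list G) : sword G l -> sword G (rev l).
Proof. unfold sword. intros. apply Forall_rev; auto. Qed.

Lemma ell_inv_le (x : G) : ell G (inv x) <= ell G x.
Proof.
  destruct (ell_word x) as [l [A [B C]]].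
  pose proof (ell_le (sword_rev A)). rewrite gprod_rev, B, length_rev in H; auto. lia.
Qed.

Lemma ell_inv (x : G) : ell G (inv x) = ell G x.
Proof. pose proof (ell_inv_le x). pose proof (ell_inv_le (inv x)). rewrite invK in H0. lia. Qed.

Lemma ell_simple (s : G) : simple G s -> ell G s = 1.
Proof.
  intro Hs. pose proof (ell_le (l := [s]) (Forall_cons _ Hs (Forall_nil _))). simpl in H. rewrite mulg1 in H.
  destruct (ell G s) eqn:E; [|lia]. apply ell0 in E. exfalso; apply (simple_ne Hs); auto.
Qed.

Lemma ell_sx_le (s x : G) : simple G s -> ell G (s ** x) <= S (ell G x).
Proof. intro Hs. pose proof (ell_mul s x). rewrite (ell_simple Hs) in H. lia. Qed.

Lemma ell_xs_le (s x : G) : simple G s -> ell G (x ** s) <= S (ell G x).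
Proof. intro Hs. pose proof (ell_mul x s). rewrite (ell_simple Hs) in H. lia. Qed.

Lemma split_at (l : list G) i : i < length l ->
  exists a, l = firstn i l ++ a :: skipn (S i) l.
Proof.
  revert i; induction l; simpl; intros i Hi. lia.
  destruct i. exists a; simpl; auto.
  destruct (IHl i) as [b Hb]. lia. exists b. simpl. rewrite Hb at 1. auto.
Qed.

Lemma exch (l : list G) (s : G) : sword G l -> length l = ell G (gprod G l) ->
  simple G s -> ell G (s ** gprod G l) <= length l ->
  exists l1 a l2, l = l1 ++ a :: l2 /\ s ** gprod G l = gprod G (l1 ++ l2).
Proof.
  intros. destruct HG as [_ [_ Hex]]. destruct (Hex l s H H0 H1 H2) as [i [Hi Heq]].
  destruct (split_at Hi) as [a Ha]. exists (firstn i l), a, (skipn (S i) l). split; auto.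
Qed.

Lemma ell_sx_ne (s x : G) : simple G s -> ell G (s ** x) <> ell G x.
Proof.
  intros Hs Heq. destruct (ell_word x) as [l [A [B C]]]. subst x.
  destruct (exch A C Hs) as [l1 [a [l2 [E1 E2]]]]. lia.
  pose proof (ell_le (l := l1 ++ l2)). rewrite <- E2 in H.
  assert (sword G (l1 ++ l2)). { rewrite E1 in A. apply sword_app_inv in A. destruct A as [A1 A2]. inversion A2; subst. apply sword_app; auto. }
  specialize (H H0). assert (length l = length l1 + S (length l2)) by (rewrite E1, length_app; auto). rewrite length_app in H. lia.
Qed.

Lemma ell_sx (s x : G) : simple G s -> ell G (s ** x) = S (ell G x) \/ S (ell G (s ** x)) = ell G x.
Proof.
  intro Hs. pose proof (ell_sx_ne (x:=x) Hs). pose proof (ell_sx_le x Hs).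
  pose proof (ell_sx_le (s ** x) Hs). rewrite gA, (simple_inv Hs), g1 in H1. lia.
Qed.

Lemma ell_xs (s x : G) : simple G s -> ell G (x ** s) = S (ell G x) \/ S (ell G (x ** s)) = ell G x.
Proof.
  intro Hs. rewrite <- (ell_inv (x ** s)), <- (ell_inv x), invM, (simple_invE Hs). apply ell_sx; auto.
Qed.

End Cox.


Section Refl.
Variable G : gen_group.
Hypothesis HG : coxeter_system G.
Local Notation "x ** y" := (@mul G x y) (at level 40, left associativity).

Lemma gprod_snoc (l : list G) a : gprod G (l ++ [a]) = gprod G l ** a.
Proof. rewrite gprod_app. simpl. rewrite mulg1. auto. Qed.

Lemma refl_simple (s : G) : simple G s -> reflection G s.
Proof. intro H. exists (one G), s. split; auto. rewrite inv1, mulg1, g1. auto. Qed.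

Lemma refl_conj (t x : G) : reflection G t -> reflection G (x ** t ** inv x).
Proof.
  intros [w [s [Hs ->]]]. exists (x ** w), s. split; auto.
  rewrite invM. rewrite !gA. auto.
Qed.

Lemma refl_inv (t : G) : reflection G t -> t ** t = one G.
Proof.
  intros [w [s [Hs ->]]].
  rewrite <- !gA. rewrite (gA (inv w) w), gV, g1. rewrite (gA s s), (simple_inv HG Hs), g1. apply mulgV.
Qed.

Lemma refl_invE (t : G) : reflection G t -> inv t = t.
Proof. intro H. apply inv_uniq. apply refl_inv; auto. Qed.

Lemma del_refl_r (l1 l2 : list G) a : simple G a ->
  exists t, reflection G t /\ gprod G (l1 ++ a :: l2) = gprod G (l1 ++ l2) ** t.
Proof.
  intro Ha. exists (inv (gprod G l2) ** a ** gprod G l2). split.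
  - pose proof (refl_conj (inv (gprod G l2)) (refl_simple Ha)). rewrite invK in H. auto.
  - rewrite !gprod_app. simpl. rewrite <- !gA. f_equal. rewrite (gA (gprod G l2)), mulgV, g1. auto.
Qed.

Lemma del_refl_l (l1 l2 : list G) a : simple G a ->
  exists t, reflection G t /\ gprod G (l1 ++ l2) = t ** gprod G (l1 ++ a :: l2).
Proof.
  intro Ha. exists (gprod G l1 ** a ** inv (gprod G l1)). split.
  - apply refl_conj, refl_simple; auto.
  - rewrite !gprod_app. simpl. rewrite <- !gA. f_equal. rewrite mulKg, gA, (simple_inv HG Ha), g1. auto.
Qed.

Section SE.
Variables (w0 s0 : G).
Hypothesis Hs0 : simple G s0.
Let t := w0 ** s0 ** inv w0.
Let phi (y : G) := ell G (inv w0 ** y) < ell G (s0 ** (inv w0 ** y)).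

Lemma lemB (z r : G) : simple G r -> ell G z < ell G (s0 ** z) ->
  ell G (s0 ** (z ** r)) < ell G (z ** r) -> z ** r = s0 ** z.
Proof.
  intros Hr H1 H2.
  destruct (ell_xs HG z Hr) as [E|E].
  2:{ exfalso. pose proof (ell_xs_le HG (s0 ** z ** r) Hr).
      rewrite <- gA, (simple_inv HG Hr), mulg1 in H. rewrite gA in H2. lia. }
  destruct (ell_word HG z) as [L [A [B C]]].
  assert (Hw : sword G (L ++ [r])) by (apply sword_app; auto; constructor; auto).
  assert (HL : length (L ++ [r]) = ell G (gprod G (L ++ [r]))) by (rewrite gprod_snoc, B, length_app; simpl; lia).
  destruct (exch HG Hw HL Hs0) as [l1 [a [l2 [E1 E2]]]].
  { rewrite gprod_snoc, B, length_app; simpl. lia. }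
  rewrite gprod_snoc, B in E2.
  destruct l2 as [|b l2'] using rev_ind.
  - apply app_inj_tail in E1. destruct E1 as [-> ->]. rewrite app_nil_r, B in E2.
    rewrite <- E2 at 1. rewrite <- !gA, (simple_inv HG Hr), mulg1. auto.
  - rewrite app_comm_cons, app_assoc in E1. apply app_inj_tail in E1. destruct E1 as [EL ->].
    rewrite app_assoc, gprod_snoc in E2. rewrite gA in E2; apply mulg_cancel_r in E2.
    exfalso. subst L.
    assert (sword G (l1 ++ l2')).
    { apply sword_app_inv in A. destruct A as [A1 A2]. inversion A2. apply sword_app; auto. }
    pose proof (ell_le HG H). rewrite <- E2, length_app in H0. rewrite <- C, !length_app in H1. simpl in H1.
    lia.
Qed.

Lemma phi_flip (z r : G) : simple G r -> ~ (phi z <-> phi (z ** r)) -> z ** r = t ** z.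
Proof.
  intros Hr Hn. unfold phi, t in *.
  set (z' := inv w0 ** z).
  assert (Ez : z = w0 ** z') by (unfold z'; rewrite mulKVg; auto).
  assert (E1 : inv w0 ** (z ** r) = z' ** r) by (unfold z'; rewrite gA; auto).
  rewrite E1 in Hn. fold z' in Hn.
  assert (K : z' ** r = s0 ** z').
  { destruct (classic (ell G z' < ell G (s0 ** z'))) as [P|P].
    - apply lemB; auto. destruct (ell_sx HG (z' ** r) Hs0); [|lia].
      exfalso. apply Hn. split; intro; auto. lia.
    - assert (P' : ell G (z' ** r) < ell G (s0 ** (z' ** r))).
      { destruct (classic (ell G (z' ** r) < ell G (s0 ** (z' ** r)))); auto. exfalso; apply Hn; split; intro; tauto. }
      assert (ell G (s0 ** z') < ell G z') by (destruct (ell_sx HG z' Hs0); lia).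
      pose proof (lemB (z:= z' ** r) Hr P').
      rewrite <- gA, (simple_inv HG Hr), mulg1 in H0. specialize (H0 H).
      rewrite H0 at 2. rewrite gA, (simple_inv HG Hs0), g1. auto. }
  rewrite Ez. rewrite <- (gA w0 z' r), K. rewrite <- !gA. rewrite mulKg. auto.
Qed.

Lemma phi_t (y : G) : phi (t ** y) <-> ~ phi y.
Proof.
  unfold phi, t.
  assert (E : inv w0 ** (w0 ** s0 ** inv w0 ** y) = s0 ** (inv w0 ** y)).
  { rewrite <- !gA. rewrite mulKg. auto. }
  rewrite E, (gA s0 s0), (simple_inv HG Hs0), g1.
  destruct (ell_sx HG (inv w0 ** y) Hs0); split; intros; lia.
Qed.

Lemma phi_path (l : list G) : forall z0, sword G l -> ~ (phi z0 <-> phi (z0 ** gprod G l)) ->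
  exists l1 a l2, l = l1 ++ a :: l2 /\ t ** (z0 ** gprod G l1) = z0 ** gprod G l1 ** a.
Proof.
  induction l as [|a l IH]; intros z0 Hw Hn.
  - exfalso. apply Hn. simpl. rewrite mulg1. tauto.
  - inversion Hw; subst.
    destruct (classic (phi z0 <-> phi (z0 ** a))) as [I|I].
    + destruct (IH (z0 ** a) H2) as [l1 [b [l2 [E1 E2]]]].
      { simpl in Hn. rewrite gA in Hn. intro J. apply Hn. tauto. }
      exists (a :: l1), b, l2. split. rewrite E1; auto. simpl. rewrite !gA. rewrite !gA in E2. auto.
    + exists [], a, l. split; auto. simpl. rewrite !mulg1. symmetry. apply phi_flip; auto.
Qed.

Lemma path_del (l1 l2 : list G) a : simple G a -> t ** gprod G l1 = gprod G l1 ** a ->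
  t ** gprod G (l1 ++ a :: l2) = gprod G (l1 ++ l2).
Proof.
  intros Ha E. rewrite !gprod_app. simpl. rewrite gA, E, <- gA, (gA a a), (simple_inv HG Ha), g1. auto.
Qed.

Lemma strong_exch0 (l : list G) : sword G l -> ell G (t ** gprod G l) < ell G (gprod G l) ->
  exists l1 a l2, l = l1 ++ a :: l2 /\ t ** gprod G l = gprod G (l1 ++ l2).
Proof.
  intros Hw Hlt.
  assert (N : ~ (phi (one G) <-> phi (one G ** gprod G l))).
  { intro I. rewrite g1 in I.
    destruct (ell_word HG (t ** gprod G l)) as [L [A [B C]]].
    destruct (@phi_path L (one G) A) as [l1 [a [l2 [E1 E2]]]].
    { rewrite g1, B. pose proof (phi_t (gprod G l)). tauto. }
    rewrite !g1 in E2.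
    assert (Ha : simple G a) by (subst L; apply sword_app_inv in A; destruct A as [_ A]; inversion A; auto).
    pose proof (path_del l2 Ha E2). rewrite <- E1, B in H.
    assert (tt : t ** t = one G) by (apply refl_inv; exists w0, s0; auto).
    rewrite gA, tt, g1 in H.
    assert (sword G (l1 ++ l2)) by (subst L; apply sword_app_inv in A; destruct A as [A1 A]; inversion A; apply sword_app; auto).
    pose proof (ell_le HG H0). rewrite <- H in H1. rewrite <- C, E1, !length_app in *. simpl in *. lia. }
  destruct (@phi_path l (one G) Hw N) as [l1 [a [l2 [E1 E2]]]].
  rewrite !g1 in E2. exists l1, a, l2. split; auto. subst l. apply path_del; auto.
  apply sword_app_inv in Hw; destruct Hw as [_ A]; inversion A; auto.
Qed.

End SE.

Lemma strong_exch (t : G) (l : list G) : reflection G t -> sword G l -> ell G (t ** gprod G l) < ell G (gprod G l) ->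
  exists l1 a l2, l = l1 ++ a :: l2 /\ t ** gprod G l = gprod G (l1 ++ l2).
Proof.
  intros [w [s [Hs ->]]]. apply strong_exch0; auto.
Qed.

Lemma strong_exch_r (t : G) (l : list G) : reflection G t -> sword G l -> ell G (gprod G l ** t) < ell G (gprod G l) ->
  exists l1 a l2, l = l1 ++ a :: l2 /\ gprod G l ** t = gprod G (l1 ++ l2).
Proof.
  intros Ht Hw Hlt.
  assert (E : gprod G l ** t = (gprod G l ** t ** inv (gprod G l)) ** gprod G l) by (rewrite mulgKV; auto).
  rewrite E in *. apply strong_exch; auto. apply refl_conj; auto.
Qed.

End Refl.


Section Bru.
Variable G : gen_group.
Hypothesis HG : coxeter_system G.
Local Notation "x ** y" := (@mul G x y) (at level 40, left associativity).
Local Notation le := (bruhat_le G).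
Local Notation step := (bruhat_step G).

Lemma step_r (t y : G) : reflection G t -> ell G y < ell G (y ** t) -> step y (y ** t).
Proof. intros. exists t. auto. Qed.

Lemma step_l (t y : G) : reflection G t -> ell G y < ell G (t ** y) -> step y (t ** y).
Proof.
  intros Ht H. exists (inv y ** t ** y). split; [|split].
  - pose proof (refl_conj (inv y) Ht). rewrite invK in H0. auto.
  - rewrite !gA, mulgV, g1. auto.
  - auto.
Qed.

Lemma le_refl (x : G) : le x x.
Proof. apply rt_refl. Qed.
Lemma le_trans (x y z : G) : le x y -> le y z -> le x z.
Proof. apply rt_trans. Qed.
Lemma step_le (x y : G) : step x y -> le x y.
Proof. apply rt_step. Qed.

Lemma step_ell (x y : G) : step x y -> ell G x < ell G y.
Proof. intros [t [_ [_ H]]]. auto. Qed.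

Lemma le_ell (x y : G) : le x y -> ell G x <= ell G y.
Proof. induction 1. apply step_ell in H; lia. lia. lia. Qed.

Lemma le_lt (x y : G) : le x y -> x <> y -> ell G x < ell G y.
Proof.
  intros H Hne. apply clos_rt_rt1n in H. destruct H. congruence.
  apply step_ell in H. apply clos_rt1n_rt in H0. apply le_ell in H0. lia.
Qed.

Lemma lt_ne (x y : G) : ell G x < ell G y -> x <> y.
Proof. intros H ->. lia. Qed.

Lemma sx_down (s x : G) : simple G s -> ell G (s ** x) < ell G x -> step (s ** x) x.
Proof.
  intros Hs H. pose proof (@step_l s (s ** x) (refl_simple Hs)).
  rewrite gA, (simple_inv HG Hs), g1 in H0. apply H0. auto.
Qed.

Lemma sx_up (s x : G) : simple G s -> ell G x < ell G (s ** x) -> step x (s ** x).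
Proof. intros Hs H. apply step_l; auto. apply refl_simple; auto. Qed.

Lemma xs_down (s x : G) : simple G s -> ell G (x ** s) < ell G x -> step (x ** s) x.
Proof.
  intros Hs H. pose proof (@step_r s (x ** s) (refl_simple Hs)).
  rewrite <- gA, (simple_inv HG Hs), mulg1 in H0. apply H0. auto.
Qed.

Lemma xs_up (s x : G) : simple G s -> ell G x < ell G (x ** s) -> step x (x ** s).
Proof. intros Hs H. apply step_r; auto. apply refl_simple; auto. Qed.

Lemma le_one (x : G) : le (one G) x.
Proof.
  remember (ell G x) as n. revert x Heqn.
  induction n as [n IH] using (well_founded_induction lt_wf). intros x En.
  destruct (ell_word HG x) as [[|a L] [A [B C]]].
  - simpl in B. subst. apply le_refl.
  - assert (Ha : simple G a) by (inversion A; auto).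
    assert (AL : sword G L) by (inversion A; auto). simpl in B.
    assert (E : ell G (gprod G L) < ell G x).
    { pose proof (ell_le HG AL). simpl in C. lia. }
    apply le_trans with (gprod G L). eapply IH; eauto. subst n; auto.
    rewrite <- B. apply step_le. apply sx_up; auto. rewrite B; auto.
Qed.

Lemma step_inv (x y : G) : step x y -> step (inv x) (inv y).
Proof.
  intros [t [Ht [-> H]]]. rewrite invM, (refl_invE HG Ht). apply step_l; auto.
  assert (E : t ** inv x = inv (x ** t)) by (rewrite invM, (refl_invE HG Ht); auto). rewrite E, !ell_inv; auto.
Qed.

Lemma le_inv (x y : G) : le x y -> le (inv x) (inv y).
Proof.
  induction 1. apply step_le, step_inv; auto. apply le_refl. eapply le_trans; eauto.
Qed.

Lemma ZL (s b d : G) : simple G s -> step b d ->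
  s ** b = d \/ step (s ** b) (s ** d) \/ (step (s ** b) b /\ step b d /\ step d (s ** d)).
Proof.
  intros Hs Hbd. pose proof Hbd as [t [Ht [Ed Hl]]].
  destruct (ell_sx HG b Hs) as [Eb|Eb]; destruct (ell_sx HG d Hs) as [Ed'|Ed'].
  - right; left. subst d. rewrite gA. apply step_r; auto. rewrite <- gA. lia.
  -
    destruct (ell_word HG (s ** d)) as [L [A [B C]]].
    assert (Ew : gprod G (s :: L) = d) by (simpl; rewrite B, gA, (simple_inv HG Hs), g1; auto).
    assert (Eb' : b = (d ** t ** inv d) ** d).
    { rewrite mulgKV. rewrite Ed, <- gA, (refl_inv HG Ht), mulg1. auto. }
    assert (Hw : sword G (s :: L)) by (constructor; auto).
    destruct (@strong_exch G HG (d ** t ** inv d) (s :: L)) as [l1 [a [l2 [E1 E2]]]]; auto.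
    { apply refl_conj; auto. }
    { rewrite Ew, <- Eb'. lia. }
    rewrite Ew, <- Eb' in E2.
    destruct l1 as [|c l1'].
    + simpl in E1. injection E1 as -> ->. left. simpl in E2. rewrite E2, B, gA, (simple_inv HG Hs), g1. auto.
    + simpl in E1. injection E1 as -> EL. right; left.
      simpl in E2. rewrite E2, gA, (simple_inv HG Hs), g1.
      rewrite <- B, EL. destruct (del_refl_r l1' l2 (a:=a)) as [t' [Ht' E3]].
      { subst L. apply sword_app_inv in A. destruct A as [_ A]. inversion A; auto. }
      rewrite E3. apply step_r; auto. rewrite <- E3, <- EL, B.
      assert (sword G (l1' ++ l2)).
      { subst L. apply sword_app_inv in A. destruct A as [A1 A]. inversion A. apply sword_app; auto. }
      pose proof (ell_le HG H). subst L. rewrite length_app in *. simpl in C. lia.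
  - right; right. split. apply sx_down; auto. lia. split; auto. apply sx_up; auto. lia.
  - right; left. subst d. rewrite gA. apply step_r; auto. rewrite <- gA. lia.
Qed.

Lemma ZL' (s y' y : G) : simple G s -> step y' y -> s ** y' = y \/ le (s ** y') (s ** y).
Proof.
  intros Hs H. destruct (ZL Hs H) as [E|[E|[E1 [E2 E3]]]]; auto.
  right. apply step_le; auto.
  right. eapply le_trans. apply step_le; eauto. eapply le_trans; apply step_le; eauto.
Qed.

Lemma sK (s x : G) : simple G s -> s ** (s ** x) = x.
Proof. intro Hs. rewrite gA, (simple_inv HG Hs), g1. auto. Qed.
Lemma Ks (s x : G) : simple G s -> x ** s ** s = x.
Proof. intro Hs. rewrite <- gA, (simple_inv HG Hs), mulg1. auto. Qed.

Lemma Plemmas (s : G) : simple G s -> forall x y, le x y ->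
  (ell G (s ** y) < ell G y -> le (s ** x) y) /\
  (ell G x < ell G (s ** x) -> ell G y < ell G (s ** y) -> le (s ** x) (s ** y)) /\
  (ell G (s ** x) < ell G x -> ell G (s ** y) < ell G y -> le (s ** x) (s ** y)) /\
  (ell G x < ell G (s ** x) -> ell G (s ** y) < ell G y -> le x (s ** y)).
Proof.
  intros Hs x y H. apply clos_rt_rtn1 in H. induction H as [|y' y Hst Hc IH].
  - split; [|split; [|split]]; intros.
    + apply step_le, sx_down; auto.
    + apply le_refl.
    + apply le_refl.
    + lia.
  - apply clos_rtn1_rt in Hc. destruct IH as [I1 [I2 [I3 I4]]].
    assert (Hyy : le y' y) by (apply step_le; auto).
    assert (HZ := ZL' Hs Hst).
    assert (Hsy : s ** y' = y -> s ** y = y') by (intros <-; apply sK; auto).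
    destruct (ell_sx HG y' Hs) as [Ey'|Ey'].
    +
      split; [|split; [|split]]; intros.
      * destruct (ell_sx HG x Hs) as [Ex|Ex].
        -- specialize (I2 ltac:(lia) ltac:(lia)). destruct HZ as [HZ|HZ].
           rewrite <- HZ; auto.
           eapply le_trans. apply I2. eapply le_trans. apply HZ. apply step_le, sx_down; auto.
        -- eapply le_trans. apply step_le, sx_down; auto; lia. eapply le_trans; eauto.
      * specialize (I2 ltac:(lia) ltac:(lia)). destruct HZ as [HZ|HZ].
        -- rewrite <- HZ. eapply le_trans. apply I2. rewrite HZ. apply step_le, sx_up; auto.
        -- eapply le_trans; eauto.
      * destruct HZ as [HZ|HZ].
        -- rewrite (Hsy HZ). eapply le_trans. apply step_le, sx_down; auto; lia. auto.
        -- eapply le_trans. apply step_le, sx_down; eauto; lia. eapply le_trans. apply Hc.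
           eapply le_trans. apply step_le, sx_up; eauto; lia. auto.
      * destruct HZ as [HZ|HZ].
        -- rewrite (Hsy HZ). auto.
        -- eapply le_trans. apply Hc. eapply le_trans. apply step_le, sx_up; eauto; lia. auto.
    +
      split; [|split; [|split]]; intros.
      * eapply le_trans. apply I1. lia. auto.
      * eapply le_trans. apply I1. lia. eapply le_trans. apply Hyy. apply step_le, sx_up; auto.
      * destruct HZ as [HZ|HZ].
        -- rewrite (Hsy HZ). eapply le_trans. apply step_le, sx_down; auto; lia. auto.
        -- eapply le_trans. apply I3; auto; lia. auto.
      * destruct HZ as [HZ|HZ].
        -- rewrite (Hsy HZ). auto.
        -- eapply le_trans. apply I4; auto; lia. auto.
Qed.

Lemma P1 (s x y : G) : simple G s -> le x y -> ell G (s ** y) < ell G y -> le (s ** x) y.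
Proof. intros Hs H. apply (Plemmas Hs H). Qed.
Lemma P2 (s x y : G) : simple G s -> le x y -> ell G x < ell G (s ** x) -> ell G y < ell G (s ** y) -> le (s ** x) (s ** y).
Proof. intros Hs H. apply (Plemmas Hs H). Qed.
Lemma P3 (s x y : G) : simple G s -> le x y -> ell G (s ** x) < ell G x -> ell G (s ** y) < ell G y -> le (s ** x) (s ** y).
Proof. intros Hs H. apply (Plemmas Hs H). Qed.
Lemma P4 (s x y : G) : simple G s -> le x y -> ell G x < ell G (s ** x) -> ell G (s ** y) < ell G y -> le x (s ** y).
Proof. intros Hs H. apply (Plemmas Hs H). Qed.

Lemma inv_sx (s x : G) : simple G s -> inv (s ** inv x) = x ** s.
Proof. intro Hs. rewrite invM, invK, (simple_invE HG Hs). auto. Qed.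
Lemma ell_sinv (s x : G) : simple G s -> ell G (s ** inv x) = ell G (x ** s).
Proof. intro Hs. rewrite <- ell_inv, inv_sx; auto. Qed.
Lemma le_inv' (x y : G) : le (inv x) (inv y) -> le x y.
Proof. intro H. apply le_inv in H. rewrite !invK in H. auto. Qed.

Lemma P1R (s x y : G) : simple G s -> le x y -> ell G (y ** s) < ell G y -> le (x ** s) y.
Proof.
  intros Hs H Hl. apply le_inv'. rewrite <- (inv_sx x Hs), invK. apply P1; auto. apply le_inv; auto.
  rewrite ell_sinv, ell_inv; auto.
Qed.
Lemma P2R (s x y : G) : simple G s -> le x y -> ell G x < ell G (x ** s) -> ell G y < ell G (y ** s) -> le (x ** s) (y ** s).
Proof.
  intros Hs H H1 H2. apply le_inv'. rewrite <- (inv_sx x Hs), <- (inv_sx y Hs), !invK. apply P2; auto. apply le_inv; auto.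
  rewrite ell_sinv, ell_inv; auto. rewrite ell_sinv, ell_inv; auto.
Qed.
Lemma P3R (s x y : G) : simple G s -> le x y -> ell G (x ** s) < ell G x -> ell G (y ** s) < ell G y -> le (x ** s) (y ** s).
Proof.
  intros Hs H H1 H2. apply le_inv'. rewrite <- (inv_sx x Hs), <- (inv_sx y Hs), !invK. apply P3; auto. apply le_inv; auto.
  rewrite ell_sinv, ell_inv; auto. rewrite ell_sinv, ell_inv; auto.
Qed.
Lemma P4R (s x y : G) : simple G s -> le x y -> ell G x < ell G (x ** s) -> ell G (y ** s) < ell G y -> le x (y ** s).
Proof.
  intros Hs H H1 H2. apply le_inv'. rewrite <- (inv_sx y Hs), !invK. apply P4; auto. apply le_inv; auto.
  rewrite ell_sinv, ell_inv; auto. rewrite ell_sinv, ell_inv; auto.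
Qed.

Lemma ZR (s p c : G) : simple G s -> step p c ->
  p ** s = c \/ step (p ** s) (c ** s) \/ (step (p ** s) p /\ step p c /\ step c (c ** s)).
Proof.
  intros Hs H. apply step_inv in H. destruct (ZL Hs H) as [E|[E|[E1 [E2 E3]]]].
  - left. rewrite <- (inv_sx p Hs), E, invK. auto.
  - right; left. apply step_inv in E. rewrite !inv_sx in E; auto.
  - right; right. apply step_inv in E1, E2, E3. rewrite !inv_sx, !invK in *; auto.
Qed.

End Bru.


Section Para.
Variable G : gen_group.
Hypothesis HG : coxeter_system G.
Local Notation "x ** y" := (@mul G x y) (at level 40, left associativity).
Local Notation le := (bruhat_le G).
Local Notation step := (bruhat_step G).

Variable K : G -> Prop.
Hypothesis HK : forall k, K k -> simple G k.

Lemma Forall_K_sword (l : list G) : Forall K l -> sword G l.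
Proof. intro H. unfold sword. eapply Forall_impl; eauto. Qed.

Lemma inW_one : inWJ G K (one G).
Proof. exists []. split; auto. Qed.

Lemma inW_gen (k : G) : K k -> inWJ G K k.
Proof. intro H. exists [k]. split. constructor; auto. simpl. apply mulg1. Qed.

Lemma inW_mul (x y : G) : inWJ G K x -> inWJ G K y -> inWJ G K (x ** y).
Proof.
  intros [l1 [A1 <-]] [l2 [A2 <-]]. exists (l1 ++ l2). split. apply Forall_app; auto. apply gprod_app.
Qed.

Lemma inW_inv (x : G) : inWJ G K x -> inWJ G K (inv x).
Proof.
  intros [l [A <-]]. exists (rev l). split. apply Forall_rev; auto. apply gprod_rev; auto.
  apply Forall_K_sword; auto.
Qed.

Lemma red_K_word (x : G) : inWJ G K x -> exists l, Forall K l /\ gprod G l = x /\ length l = ell G x.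
Proof.
  intros [l [A <-]]. induction l as [|a l IH].
  - exists []. simpl. rewrite ell_one; auto.
  - inversion A; subst. destruct (IH H2) as [r [Ar [Br Cr]]].
    simpl. destruct (ell_sx HG (gprod G l) (HK H1)) as [E|E].
    + exists (a :: r). split. constructor; auto. simpl. rewrite Br. split; auto. lia.
    + rewrite <- Br in E, Cr.
      destruct (exch HG (l:=r) (s:=a) (Forall_K_sword Ar) Cr (HK H1)) as [l1 [b [l2 [E1 E2]]]]. lia.
      exists (l1 ++ l2). rewrite <- Br, E2. split; [|split; [auto|]].
      * subst r. apply Forall_app in Ar. destruct Ar as [X Y]. inversion Y. apply Forall_app; auto.
      * rewrite <- E2. subst r. rewrite length_app in *. simpl in Cr. lia.
Qed.

Lemma SinWK (s : G) : simple G s -> inWJ G K s -> K s.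
Proof.
  intros Hs Hin. destruct (red_K_word Hin) as [l [A [B C]]]. rewrite (ell_simple HG Hs) in C.
  destruct l as [|k [|]]; simpl in C; try discriminate. simpl in B. rewrite mulg1 in B. subst. inversion A; auto.
Qed.

Lemma SUPP (l : list G) : forall x, inWJ G K x -> sword G l -> gprod G l = x -> length l = ell G x -> Forall K l.
Proof.
  induction l as [|a l IH]; intros x Hx Hw Hg Hl. constructor.
  inversion Hw; subst. simpl in Hl.
  destruct (red_K_word Hx) as [r [Ar [Br Cr]]].
  assert (Hlt : ell G (a ** gprod G (a :: l)) < ell G (gprod G (a :: l))).
  { simpl. rewrite sK; auto. pose proof (ell_le HG H2). lia. }
  rewrite <- Br in Hlt. rewrite <- Br in Cr.
  destruct (exch HG (l:=r) (s:=a) (Forall_K_sword Ar) (eq_sym (eq_sym Cr)) H1) as [l1 [b [l2 [E1 E2]]]]. lia.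
  assert (HW : inWJ G K (a ** gprod G (a :: l))).
  { rewrite <- Br, E2. exists (l1 ++ l2). split; auto. subst r. apply Forall_app in Ar. destruct Ar as [X Y]. inversion Y. apply Forall_app; auto. }
  simpl in HW. rewrite sK in HW; auto.
  constructor.
  - apply SinWK; auto.
    assert (E : a = (a ** gprod G (a :: l)) ** inv (gprod G (a :: l))) by (rewrite mulgK; auto).
    rewrite E. apply inW_mul. simpl gprod. rewrite sK; auto. apply inW_inv. rewrite <- Br.
    exists r; auto.
  - apply (IH (gprod G l)); auto. simpl in *. pose proof (ell_le HG H2).
    pose proof (ell_sx_le HG (gprod G l) H1). lia.
Qed.

Lemma supp_sub (x t : G) : inWJ G K x -> supp G x t -> K t.
Proof.
  intros Hx [l [A [B [C D]]]]. pose proof (SUPP Hx A B C). rewrite Forall_forall in H. auto.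
Qed.

Lemma le_inW (x y : G) : le x y -> inWJ G K y -> inWJ G K x.
Proof.
  intro H. apply clos_rt_rt1n in H. induction H as [|x z y Hst Hc IH]; auto.
  intro Hy. specialize (IH Hy). destruct Hst as [t [Ht [Ez Hl]]].
  destruct IH as [l [A B]].
  assert (Ex : x = (z ** t ** inv z) ** z) by (rewrite mulgKV, Ez, <- gA, (refl_inv HG Ht), mulg1; auto).
  destruct (strong_exch HG (t:= z ** t ** inv z) (l:=l)) as [l1 [a [l2 [E1 E2]]]].
  apply refl_conj; auto. apply Forall_K_sword; auto. rewrite B, <- Ex. lia.
  exists (l1 ++ l2). split. subst l. apply Forall_app in A. destruct A as [X Y]. inversion Y. apply Forall_app; auto.
  rewrite <- E2, B, <- Ex. auto.
Qed.

Lemma desc_supp (r v : G) : simple G r -> ell G (r ** v) < ell G v -> supp G v r.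
Proof.
  intros Hr Hl. destruct (ell_word HG v) as [L [A [B C]]].
  destruct (exch HG (l:=L) (s:=r) A (eq_sym (eq_trans (f_equal (ell G) B) (eq_sym C)))) as [l1 [a [l2 [E1 E2]]]]; auto.
  rewrite B. lia.
  exists (r :: l1 ++ l2). split; [|split; [|split]].
  - constructor; auto. subst L. apply sword_app_inv in A. destruct A as [X Y]. inversion Y. apply sword_app; auto.
  - simpl. rewrite <- E2, B, sK; auto.
  - simpl. subst L. rewrite length_app in *. simpl in C. lia.
  - left; auto.
Qed.

Definition isrep (m : G) := forall h, inWJ G K h -> ell G m <= ell G (m ** h).

Lemma upJ_spec (x : G) : min_coset_rep G K x (upJ G K x).
Proof.
  unfold upJ. apply epsilon_spec.
  destruct (@nat_least (fun n => exists z, inWJ G K (inv z ** x) /\ ell G z = n)) as [n [[z [H1 H2]] Hmin]].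
  { exists (ell G x). exists x. split; auto. rewrite gV. apply inW_one. }
  exists z. split; auto. intros z' H'. rewrite H2. apply Hmin. eauto.
Qed.

Lemma up_rep (x : G) : isrep (upJ G K x).
Proof.
  destruct (upJ_spec x) as [H1 H2]. intros h Hh. apply H2.
  rewrite invM, <- gA. apply inW_mul; auto. apply inW_inv; auto.
Qed.

Lemma down_in (x : G) : inWJ G K (downJ G K x).
Proof. destruct (upJ_spec x) as [H1 H2]. apply H1. Qed.

Lemma up_down (x : G) : upJ G K x ** downJ G K x = x.
Proof. unfold downJ. apply mulKVg. Qed.

Lemma rep_add_word (m : G) : isrep m -> forall l, Forall K l -> length l = ell G (gprod G l) ->
  ell G (m ** gprod G l) = ell G m + length l.
Proof.
  intros Hm l. induction l as [|k l IH] using rev_ind; intros Hl Hr.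
  - simpl. rewrite mulg1. lia.
  - apply Forall_app in Hl. destruct Hl as [Hl Hk]. inversion Hk as [|? ? Hk1 _]; subst.
    assert (Hr' : length l = ell G (gprod G l)).
    { rewrite gprod_snoc, length_app in Hr. simpl in Hr. pose proof (ell_xs_le HG (gprod G l) (HK Hk1)).
      pose proof (ell_le HG (Forall_K_sword Hl)). lia. }
    specialize (IH Hl Hr'). rewrite gprod_snoc, gA, length_app. simpl.
    destruct (ell_xs HG (m ** gprod G l) (HK Hk1)) as [E|E]; [lia|exfalso].
    destruct (ell_word HG m) as [M [A [B C]]].
    assert (HW : sword G (M ++ l)) by (apply sword_app; auto; apply Forall_K_sword; auto).
    destruct (strong_exch_r HG (t:=k) (l:= M ++ l) (refl_simple (HK Hk1)) HW) as [l1 [a [l2 [E1 E2]]]].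
    { rewrite gprod_app, B. lia. }
    rewrite gprod_app, B in E2.
    apply app_eq_app in E1. destruct E1 as [mid [[EM Ea]|[EM Ea]]].
    + destruct mid as [|b M2].
      * simpl in Ea. rewrite app_nil_r in EM. subst l1 l.
        rewrite gprod_app, B, <- gA in E2. apply mulg_cancel_l in E2.
        assert (sword G (l2)) by (apply Forall_K_sword; inversion Hl; auto).
        pose proof (ell_le HG H). rewrite <- E2 in H0. rewrite gprod_snoc in Hr. rewrite <- Hr in H0.
        rewrite length_app in H0. simpl in H0. lia.
      * simpl in Ea. injection Ea as -> ->. subst M.
        (* deletion in M *)
        assert (Hm' : ell G (gprod G (l1 ++ M2)) < ell G m).
        { pose proof (ell_le HG (l:=l1 ++ M2)). rewrite length_app in *. rewrite <- C. simpl.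
          apply sword_app_inv in A. destruct A as [A1 A2]. inversion A2. specialize (H (sword_app A1 H3)). lia. }
        assert (Eq : gprod G (l1 ++ M2) = m ** (gprod G l ** k ** inv (gprod G l))).
        { rewrite !gA, E2, (app_assoc l1 M2 l), (gprod_app (l1 ++ M2) l), mulgK. auto. }
        pose proof (Hm (gprod G l ** k ** inv (gprod G l))). rewrite <- Eq in H.
        assert (inWJ G K (gprod G l ** k ** inv (gprod G l))).
        { apply inW_mul. apply inW_mul. exists l; auto. apply inW_gen; auto. apply inW_inv. exists l; auto. }
        specialize (H H0). lia.
    + subst l1 l. rewrite <- (app_assoc M mid l2), (gprod_app M (mid ++ l2)), B, <- gA in E2. apply mulg_cancel_l in E2.
      assert (sword G (mid ++ l2)).
      { apply Forall_K_sword. apply Forall_app in Hl. destruct Hl as [X Y]. inversion Y. apply Forall_app; auto. }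
      pose proof (ell_le HG H). rewrite <- E2 in H0. rewrite gprod_snoc in Hr. rewrite <- Hr in H0.
      rewrite !length_app in *. simpl in H0. lia.
Qed.

Lemma rep_add (m h : G) : isrep m -> inWJ G K h -> ell G (m ** h) = ell G m + ell G h.
Proof.
  intros Hm Hh. destruct (red_K_word Hh) as [l [A [B C]]]. subst h.
  rewrite rep_add_word; auto.
Qed.

Lemma rep_uniq (m m' : G) : isrep m -> isrep m' -> inWJ G K (inv m ** m') -> m = m'.
Proof.
  intros Hm Hm' Hh.
  pose proof (rep_add Hm Hh). rewrite mulKVg in H.
  pose proof (Hm' (inv (inv m ** m')) (inW_inv Hh)). rewrite invM, invK, mulKVg in H0.
  assert (ell G (inv m ** m') = 0) by lia. apply ell0 in H1; auto.
  rewrite <- (mulKVg m m'), H1, mulg1. auto.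
Qed.

Lemma decomp (m h : G) : isrep m -> inWJ G K h -> upJ G K (m ** h) = m /\ downJ G K (m ** h) = h.
Proof.
  intros Hm Hh. assert (E : upJ G K (m ** h) = m).
  { symmetry. apply rep_uniq; auto. apply up_rep.
    destruct (upJ_spec (m ** h)) as [H1 _].
    assert (E : inv m ** upJ G K (m ** h) = h ** inv (inv (upJ G K (m ** h)) ** (m ** h))).
    { rewrite invM, invK, invM, <- (gA (inv h)), mulKVg. auto. }
    rewrite E. apply inW_mul; auto. apply inW_inv; auto. }
  split; auto. unfold downJ. rewrite E. apply mulKg.
Qed.

Lemma one_rep : isrep (one G).
Proof. intros h _. rewrite (ell_one HG). lia. Qed.

Lemma inW_up (x : G) : inWJ G K x -> upJ G K x = one G /\ downJ G K x = x.
Proof. intro H. pose proof (decomp one_rep H). rewrite g1 in H0. auto. Qed.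

Lemma rep_noRdesc (m k : G) : isrep m -> K k -> ell G m < ell G (m ** k).
Proof.
  intros Hm Hk. rewrite (rep_add Hm (inW_gen Hk)), (ell_simple HG (HK Hk)). lia.
Qed.

Lemma noRdesc_rep (y : G) : (forall k, K k -> ell G y < ell G (y ** k)) -> isrep y.
Proof.
  intro H. set (m := upJ G K y). set (h := downJ G K y).
  assert (Ey : m ** h = y) by apply up_down.
  assert (Hh : inWJ G K h) by apply down_in.
  assert (Hm : isrep m) by apply up_rep.
  pose proof (rep_add Hm Hh) as El. rewrite Ey in El.
  destruct (red_K_word Hh) as [l [A [B C]]].
  destruct l as [|k q] using rev_ind.
  - simpl in B. rewrite <- Ey, <- B, mulg1. auto.
  - exfalso. apply Forall_app in A. destruct A as [A1 A2]. assert (H2 : K k) by (inversion A2; auto).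
    specialize (H k H2).
    rewrite <- Ey, <- B, gprod_snoc, <- gA, (Ks HG _ (HK H2)) in H.
    pose proof (ell_mul HG m (gprod G q)). pose proof (ell_le HG (Forall_K_sword A1)).
    rewrite <- gprod_snoc, B, Ey in H. rewrite length_app in C. simpl in C. lia.
Qed.

Lemma deodhar (a r : G) : isrep a -> simple G r -> isrep (r ** a) \/ exists k, K k /\ r ** a = a ** k.
Proof.
  intros Ha Hr.
  destruct (classic (forall k, K k -> ell G (r ** a) < ell G (r ** a ** k))) as [H|H].
  - left. apply noRdesc_rep; auto.
  - right. apply not_all_ex_not in H. destruct H as [k H].
    apply imply_to_and in H. destruct H as [Hk H]. exists k. split; auto.
    assert (Hlt : ell G (r ** a ** k) < ell G (r ** a)) by (destruct (ell_xs HG (r ** a) (HK Hk)); lia).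
    assert (Hak := rep_noRdesc Ha Hk).
    assert (E1 : ell G (a ** k) = S (ell G a)) by (rewrite (rep_add Ha (inW_gen Hk)), (ell_simple HG (HK Hk)); lia).
    assert (Era : ell G (r ** a) = S (ell G a)).
    { destruct (ell_sx HG a Hr); auto. pose proof (ell_sx_le HG (r ** a ** k) Hr).
      rewrite (gA r (r ** a) k), sK in H1; auto. lia. }
    destruct (ell_word HG a) as [A [WA [BA CA]]].
    assert (HW : sword G (A ++ [k])) by (apply sword_app; auto; constructor; auto).
    destruct (exch HG (l := A ++ [k]) (s := r) HW) as [l1 [b [l2 [E3 E4]]]]; auto.
    { rewrite gprod_snoc, BA, length_app, E1. simpl. lia. }
    { rewrite gprod_snoc, BA, length_app. simpl. rewrite gA. lia. }
    rewrite gprod_snoc, BA in E4.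
    destruct l2 as [|c l2'] using rev_ind.
    + apply app_inj_tail in E3. destruct E3 as [-> ->]. rewrite app_nil_r, BA in E4.
      rewrite <- E4 at 2. rewrite gA, Ks; auto.
    + exfalso. rewrite app_comm_cons, app_assoc in E3. apply app_inj_tail in E3. destruct E3 as [EA ->].
      rewrite app_assoc, gprod_snoc, gA in E4. apply mulg_cancel_r in E4.
      subst A. apply sword_app_inv in WA. destruct WA as [W1 W2]. inversion W2 as [|? ? Wb Wl].
      pose proof (ell_le HG (sword_app W1 Wl)) as Hle. rewrite <- E4 in Hle. rewrite !length_app in *. simpl in *. lia.
Qed.

Lemma rep_prefix (u r : G) : isrep u -> simple G r -> ell G (r ** u) < ell G u -> isrep (r ** u).
Proof.
  intros Hu Hr Hl. apply noRdesc_rep. intros k Hk.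
  destruct (ell_xs HG (r ** u) (HK Hk)) as [E|E]. lia.
  exfalso. pose proof (rep_noRdesc Hu Hk). pose proof (ell_sx_le HG (r ** u ** k) Hr).
  rewrite <- !gA, sK in H0; auto. rewrite gA in H0. lia.
Qed.

Lemma left_add (q h : G) : (forall k, K k -> ell G h < ell G (k ** h)) -> inWJ G K q ->
  ell G (q ** h) = ell G q + ell G h.
Proof.
  intros H Hq. assert (R : isrep (inv h)).
  { apply noRdesc_rep. intros k Hk. specialize (H k Hk).
    rewrite <- (simple_invE HG (HK Hk)). rewrite <- invM, !ell_inv. all: auto. }
  pose proof (rep_add R (inW_inv Hq)). rewrite <- invM, !ell_inv in H0. all: auto; lia.
Qed.

End Para.


Section BP.
Variable G : gen_group.
Hypothesis HG : coxeter_system G.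
Local Notation "x ** y" := (@mul G x y) (at level 40, left associativity).
Local Notation le := (bruhat_le G).
Local Notation step := (bruhat_step G).

Lemma supp_simple (x t : G) : supp G x t -> simple G t.
Proof. intros [l [A [_ [_ I]]]]. unfold sword in A. rewrite Forall_forall in A. auto. Qed.

Lemma inW_supp (x : G) : inWJ G (supp G x) x.
Proof.
  destruct (ell_word HG x) as [l [A [B C]]]. exists l. split; auto.
  rewrite Forall_forall. intros t I. exists l. auto.
Qed.

Lemma supp_prefix (r u t : G) : simple G r -> ell G (r ** u) < ell G u -> supp G (r ** u) t -> supp G u t.
Proof.
  intros Hr Hl [l [A [B [C I]]]]. exists (r :: l). split; [|split; [|split]].
  - constructor; auto.
  - simpl. rewrite B, sK; auto.
  - simpl. destruct (ell_sx HG u Hr); lia.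
  - right; auto.
Qed.

Lemma mono (n : nat) : forall v u a c, ell G v = n -> ell G (u ** v) = ell G u + ell G v ->
  le a u -> le c v -> le (a ** c) (u ** v).
Proof.
  induction n as [|n IH]; intros v u a c Hn Hl Ha Hc.
  - apply ell0 in Hn; auto. subst v. pose proof (le_ell Hc). rewrite (ell_one HG) in H.
    assert (c = one G) by (apply ell0; auto; lia). subst c. rewrite !mulg1. auto.
  - destruct (ell_word HG v) as [L [A [B C]]].
    destruct L as [|r L'] using rev_ind. simpl in C. lia.
    clear IHL'. apply sword_app_inv in A. destruct A as [A1 A2]. assert (Hr : simple G r) by (inversion A2; auto).
    rewrite gprod_snoc in B. set (v' := gprod G L') in *.
    assert (Ev' : ell G v' = n).
    { pose proof (ell_le HG A1). pose proof (ell_xs_le HG v' Hr). rewrite B in H0.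
      rewrite length_app in C. simpl in C. fold v' in H. lia. }
    assert (Hv : v ** r = v') by (rewrite <- B; apply Ks; auto).
    assert (Hl' : ell G (u ** v') = ell G u + ell G v').
    { pose proof (ell_mul HG u v'). pose proof (ell_xs_le HG (u ** v') Hr). rewrite <- gA, B in H0. lia. }
    assert (Hvr : ell G (v ** r) < ell G v) by (rewrite Hv; lia).
    assert (Huv : ell G (u ** v') < ell G (u ** v' ** r)) by (rewrite <- gA, B; lia).
    destruct (ell_xs HG c Hr) as [Ec|Ec].
    + pose proof (P4R HG Hr Hc ltac:(lia) Hvr). rewrite Hv in H.
      pose proof (IH v' u a c Ev' Hl' Ha H). eapply le_trans. apply H0.
      rewrite <- B, gA. apply step_le, xs_up; auto.
    + pose proof (P3R HG Hr Hc ltac:(lia) Hvr). rewrite Hv in H.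
      pose proof (IH v' u a (c ** r) Ev' Hl' Ha H).
      rewrite <- B, gA.
      destruct (ell_xs HG (a ** (c ** r)) Hr) as [E|E].
      * pose proof (P2R HG Hr H0 ltac:(lia) Huv). rewrite gA, Ks in H1; auto.
      * eapply le_trans with (a ** (c ** r)).
        assert (a ** c = a ** (c ** r) ** r) by (rewrite gA, Ks; auto).
        rewrite H1. apply step_le, xs_down; auto. lia.
        eapply le_trans. apply H0. apply step_le, xs_up; auto.
Qed.

Variable J : G -> Prop.
Hypothesis HJ : forall t, J t -> simple G t.

Lemma BPL (n : nat) : forall u v, ell G u = n -> isrep J u -> inWJ G J v ->
  (forall t, supp G u t -> J t -> DL G v t) ->
  forall x, le x (u ** v) -> le (upJ G J x) u /\ le (downJ G J x) v.
Proof.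
  induction n as [|n IH]; intros u v Hn Hu Hv Hbp x Hx.
  - apply ell0 in Hn; auto. subst u. rewrite g1 in Hx.
    pose proof (le_inW HG HJ Hx Hv). destruct (inW_up HG HJ H) as [E1 E2].
    rewrite E1, E2. split; auto. apply le_refl.
  - destruct (ell_word HG u) as [[|r L] [A [B C]]]. simpl in C. lia.
    assert (Hr : simple G r) by (inversion A; auto). assert (AL : sword G L) by (inversion A; auto). simpl in B.
    set (u' := r ** u).
    assert (Eu' : u' = gprod G L) by (unfold u'; rewrite <- B, sK; auto).
    assert (Hlu : ell G u' < ell G u).
    { rewrite Eu'. pose proof (ell_le HG AL). simpl in C. lia. }
    assert (Hu'n : ell G u' = n).
    { pose proof (ell_sx HG u Hr). fold u' in H. lia. }
    assert (Hu' : isrep J u') by (apply rep_prefix; auto).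
    assert (Hbp' : forall t, supp G u' t -> J t -> DL G v t).
    { intros t Ht Jt. apply Hbp; auto. eapply supp_prefix; eauto. }
    assert (Hadd := rep_add HG HJ Hu Hv).
    assert (Hadd' := rep_add HG HJ Hu' Hv).
    assert (Ew : r ** (u ** v) = u' ** v) by (unfold u'; apply gA).
    assert (Hrw : ell G (r ** (u ** v)) < ell G (u ** v)) by (rewrite Ew; lia).
    assert (Hu'u : le u' u) by (apply step_le; unfold u'; pose proof (sx_down HG Hr Hlu); unfold u' in H; auto).
    set (a := upJ G J x). set (b := downJ G J x).
    assert (Ex : a ** b = x) by (apply up_down; auto).
    assert (Ha : isrep J a) by (apply up_rep; auto).
    assert (Hb : inWJ G J b) by (apply down_in; auto).
    assert (Elx : ell G x = ell G a + ell G b) by (rewrite <- Ex; apply (rep_add HG HJ); auto).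
    destruct (ell_sx HG x Hr) as [Erx|Erx].
    + pose proof (P4 HG Hr Hx ltac:(lia) Hrw). rewrite Ew in H.
      destruct (IH u' v Hu'n Hu' Hv Hbp' x H). split; auto. eapply le_trans; eauto.
    + pose proof (P3 HG Hr Hx ltac:(lia) Hrw). rewrite Ew in H.
      destruct (IH u' v Hu'n Hu' Hv Hbp' (r ** x) H) as [I1 I2].
      destruct (deodhar HG HJ Ha Hr) as [D|[k [Hk D]]].
      * assert (Erx' : r ** x = (r ** a) ** b) by (rewrite <- Ex, gA; auto).
        destruct (decomp HG HJ D Hb) as [U1 U2]. rewrite <- Erx' in U1, U2.
        rewrite U1 in I1. rewrite U2 in I2. split; auto.
        pose proof (rep_add HG HJ D Hb). rewrite <- Erx' in H0.
        pose proof (P2 HG Hr I1). rewrite sK in H1; auto. assert (Eu : r ** u' = u) by (unfold u'; apply sK; auto). rewrite Eu in H1. apply H1.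
        lia. lia.
      * assert (Erx' : r ** x = a ** (k ** b)) by (rewrite <- Ex, gA, D, gA; auto).
        assert (Hkb : inWJ G J (k ** b)) by (apply inW_mul; auto; apply inW_gen; auto).
        destruct (decomp HG HJ Ha Hkb) as [U1 U2]. rewrite <- Erx' in U1, U2.
        rewrite U1 in I1. rewrite U2 in I2. split. eapply le_trans; eauto.
        pose proof (rep_add HG HJ Ha Hkb). rewrite <- Erx' in H0.
        assert (Hku : supp G u k).
        { apply (SinWK HG (K := supp G u)). apply supp_simple. apply HJ; auto.
          assert (Hau : inWJ G (supp G u) a).
          { apply (le_inW HG (K := supp G u) (fun k H => supp_simple H) (y := u)). eapply le_trans; eauto. apply inW_supp. }
          assert (E : k = inv a ** (r ** a)) by (rewrite D, mulKg; auto).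
          rewrite E. apply inW_mul. apply (inW_inv HG (fun k H => supp_simple H)); auto.
          apply inW_mul; auto. apply inW_gen. apply (desc_supp HG); auto. }
        destruct (Hbp k Hku Hk) as [_ Dk].
        pose proof (P1 HG (HJ Hk) I2 Dk). rewrite sK in H1; auto.
Qed.

End BP.


Lemma split_app {T : Type} (C D l1 l2 : list T) (a : T) : C ++ D = l1 ++ a :: l2 ->
  (exists D1 D2, D = D1 ++ a :: D2 /\ l1 ++ l2 = C ++ D1 ++ D2) \/
  (exists C1 C2, C = C1 ++ a :: C2 /\ l1 ++ l2 = C1 ++ C2 ++ D).
Proof.
  intro E. apply app_eq_app in E. destruct E as [mid [[E1 E2]|[E1 E2]]].
  - destruct mid as [|b M2].
    + simpl in E2. subst. left. exists [], l2. rewrite app_nil_r. auto.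
    + simpl in E2. injection E2 as -> ->. right. exists l1, M2. subst; auto.
  - left. exists mid, l2. subst. rewrite <- app_assoc. auto.
Qed.

Section Main.
Variable G : gen_group.
Hypothesis HG : coxeter_system G.
Variable w : G.
Variable J : G -> Prop.
Variable s : G.
Hypothesis HJ : forall t, J t -> simple G t.
Hypothesis HBP : BP_decomposition G J w.
Hypothesis Hs : simple G s.
Hypothesis Hsupp : forall t, (supp G (upJ G J w) t /\ supp G (downJ G J w) t) <-> t = s.

Local Notation "x ** y" := (@mul G x y) (at level 40, left associativity).
Local Notation le := (bruhat_le G).
Local Notation step := (bruhat_step G).
Local Notation phi := (middle_mult G J s).
Local Notation P := (interval G (one G) w).
Local Notation u := (upJ G J w).
Local Notation v := (downJ G J w).

Lemma HsA : supp G u s. Proof. apply Hsupp; auto. Qed.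
Lemma HsB : supp G v s. Proof. apply Hsupp; auto. Qed.
Lemma Hu : isrep J u. Proof. apply up_rep; auto. Qed.
Lemma Hv : inWJ G J v. Proof. apply down_in. Qed.
Lemma Huv : u ** v = w. Proof. apply up_down. Qed.
Lemma HsJ : J s. Proof. apply (supp_sub HG HJ Hv HsB). Qed.
Lemma HsD : ell G (s ** v) < ell G v. Proof. apply (HBP HsA HsJ). Qed.
Lemma Hadd : ell G (u ** v) = ell G u + ell G v. Proof. apply (rep_add HG HJ Hu Hv). Qed.
Lemma HA : forall k, supp G u k -> simple G k. Proof. intros k H; apply (supp_simple H). Qed.
Lemma HB : forall k, supp G v k -> simple G k. Proof. intros k H; apply (supp_simple H). Qed.
Lemma AB (t : G) : supp G u t -> supp G v t -> t = s. Proof. intros; apply Hsupp; auto. Qed.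
Lemma AJ (t : G) : supp G u t -> J t -> t = s.
Proof. intros H1 H2. apply AB; auto. destruct (HBP H1 H2) as [Ht Hl]. apply (desc_supp HG); auto. Qed.

Lemma phi_eq (x : G) : phi x = upJ G J x ** (s ** downJ G J x).
Proof. unfold middle_mult. rewrite gA. auto. Qed.

Lemma phi_dec (x : G) : upJ G J (phi x) = upJ G J x /\ downJ G J (phi x) = s ** downJ G J x.
Proof.
  rewrite phi_eq. apply (decomp HG HJ). apply up_rep; auto.
  apply inW_mul. apply inW_gen, HsJ. apply down_in.
Qed.

Lemma phi_invol (x : G) : phi (phi x) = x.
Proof.
  destruct (phi_dec x) as [E1 E2]. rewrite phi_eq, E1, E2, (sK HG _ Hs). apply up_down.
Qed.

Lemma phi_inj (x y : G) : phi x = phi y -> x = y.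
Proof. intro E. rewrite <- (phi_invol x), <- (phi_invol y), E. auto. Qed.

Lemma phi_ne (x : G) : phi x <> x.
Proof.
  intro E0. rewrite phi_eq in E0.
  assert (E : upJ G J x ** (s ** downJ G J x) = upJ G J x ** downJ G J x) by (rewrite E0, up_down; auto).
  apply mulg_cancel_l in E. rewrite <- (g1 (downJ G J x)) in E at 2. apply mulg_cancel_r in E.
  apply (simple_ne HG Hs); auto.
Qed.

Lemma phi_len (x : G) : ell G (phi x) = ell G (upJ G J x) + ell G (s ** downJ G J x) /\
  ell G x = ell G (upJ G J x) + ell G (downJ G J x).
Proof.
  split.
  - rewrite phi_eq. apply (rep_add HG HJ). apply up_rep; auto. apply inW_mul. apply inW_gen, HsJ. apply down_in.
  - rewrite <- (up_down J x) at 1. apply (rep_add HG HJ). apply up_rep; auto. apply down_in.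
Qed.

Lemma phi_refl (x : G) : exists t, reflection G t /\ phi x = x ** t.
Proof.
  set (b := downJ G J x). exists (inv b ** s ** b). split.
  - pose proof (refl_conj (inv b) (refl_simple Hs)). rewrite invK in H. auto.
  - rewrite phi_eq. fold b. rewrite <- (up_down J x) at 2. fold b.
    rewrite <- gA. f_equal. rewrite <- gA, mulKVg. auto.
Qed.

Lemma cover_of (x y : G) : P x -> P y -> step x y -> ell G y = S (ell G x) -> covers_in G P x y.
Proof.
  intros Px Py St El. split; [|split; [|split]]; auto.
  - split. apply step_le; auto. apply lt_ne. lia.
  - intros [z [_ [[H1 H2] [H3 H4]]]]. pose proof (le_lt H1 H2). pose proof (le_lt H3 H4). lia.
Qed.

Lemma closure (x : G) : P x -> P (phi x).
Proof.
  intros [_ Hx]. split. apply le_one; auto.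
  rewrite <- Huv in Hx.
  destruct (BPL HG HJ (n := ell G u) eq_refl Hu Hv HBP Hx) as [I1 I2].
  pose proof (P1 HG Hs I2 HsD).
  rewrite phi_eq, <- Huv. apply (mono HG (n := ell G v) eq_refl Hadd I1 H).
Qed.

Lemma cover_phi (x : G) : P x -> covers_in G P x (phi x) \/ covers_in G P (phi x) x.
Proof.
  intro Px. pose proof (closure Px) as Pp. destruct (phi_refl x) as [t [Ht E]].
  destruct (phi_len x) as [L1 L2].
  destruct (ell_sx HG (downJ G J x) Hs) as [D|D].
  - left. apply cover_of; auto. rewrite E. apply step_r; auto. rewrite <- E. lia. lia.
  - right. apply cover_of; auto.
    assert (Ex : x = phi x ** t) by (rewrite E, <- gA, (refl_inv HG Ht), mulg1; auto).
    rewrite Ex at 2. apply step_r; auto. rewrite <- Ex. lia. lia.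
Qed.

Lemma rt_first (x y : G) : le x y -> x = y \/ exists z, step x z /\ le z y.
Proof.
  intro H. apply clos_rt_rt1n in H. destruct H. left; auto. right. eexists; split; eauto. apply clos_rt1n_rt; auto.
Qed.

Lemma cover_step (x y : G) : covers_in G P x y -> step x y.
Proof.
  intros [Px [Py [[Hle Hne] Hno]]]. destruct (rt_first Hle) as [E|[z [St Rz]]]. congruence.
  destruct (classic (z = y)) as [->|Hzy]; auto.
  exfalso. apply Hno. exists z. split; [|split].
  - split. apply le_one; auto. eapply le_trans; eauto. apply Py.
  - split. apply step_le; auto. apply lt_ne. apply step_ell; auto.
  - split; auto.
Qed.

Lemma liftL (c z z' : G) : isrep J c -> inWJ G J z -> inWJ G J z' -> step z z' -> step (c ** z) (c ** z').
Proof.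
  intros Hc Hz Hz' [t [Ht [E Hl]]]. exists t. split; auto. split. rewrite E, gA; auto.
  rewrite (rep_add HG HJ Hc Hz), (rep_add HG HJ Hc Hz'). lia.
Qed.

Lemma liftR (h q q' : G) : (forall k, supp G u k -> ell G h < ell G (k ** h)) ->
  inWJ G (supp G u) q -> inWJ G (supp G u) q' -> step q q' -> step (q ** h) (q' ** h).
Proof.
  intros Hh Hq Hq' [t [Ht [E Hl]]]. exists (inv h ** t ** h). split; [|split].
  - pose proof (refl_conj (inv h) Ht). rewrite invK in H. auto.
  - rewrite E. rewrite !gA. f_equal. rewrite <- !gA. f_equal. rewrite mulKVg. auto.
  - rewrite (left_add HG HA Hh Hq), (left_add HG HA Hh Hq'). lia.
Qed.

Lemma commute_s (H : list G) : Forall (fun t => t = s) H -> s ** gprod G H = gprod G H ** s.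
Proof.
  induction 1. simpl. rewrite g1, mulg1. auto. subst. simpl. rewrite <- gA, IHForall. rewrite gA. auto.
Qed.

Lemma noLdesc (h : G) : inWJ G (supp G v) h -> ell G h < ell G (s ** h) ->
  forall k, supp G u k -> ell G h < ell G (k ** h).
Proof.
  intros Hh Hsh k Hk. destruct (ell_sx HG h (HA Hk)) as [E|E]. lia.
  exfalso. assert (supp G h k) by (apply (desc_supp HG (HA Hk)); lia).
  assert (supp G v k) by (apply (supp_sub HG HB Hh H)).
  rewrite (AB Hk H0) in E. lia.
Qed.

Lemma special (x y : G) : covers_in G P x y -> phi x = y \/ bruhat_lt G (phi x) (phi y).
Proof.
  intro Hcov. pose proof (cover_step Hcov) as Hst. pose proof Hcov as [Px [Py [[_ Hxy] _]]].
  assert (Hlt : forall a b, le a b -> phi a = y \/ bruhat_lt G a (phi y) -> True) by auto.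
  assert (NE : phi x <> phi y) by (intro E; apply Hxy; apply phi_inj; auto).
  set (c := upJ G J y). set (d := downJ G J y).
  assert (Ey : c ** d = y) by apply up_down.
  assert (Hc : isrep J c) by (apply up_rep; auto).
  assert (Hd : inWJ G J d) by apply down_in.
  assert (Hcd : ell G y = ell G c + ell G d) by (rewrite <- Ey; apply (rep_add HG HJ); auto).
  destruct (ell_word HG c) as [C [WC [GC LC]]].
  destruct (ell_word HG d) as [D [WD [GD LD]]].
  assert (FD : Forall J D) by (apply (SUPP HG HJ Hd WD GD LD)).
  destruct Hst as [t [Ht [Eyx Hlxy]]].
  assert (Ex : x = y ** t) by (rewrite Eyx, <- gA, (refl_inv HG Ht), mulg1; auto).
  assert (GCD : gprod G (C ++ D) = y) by (rewrite gprod_app, GC, GD; auto).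
  destruct (strong_exch_r HG (t := t) (l := C ++ D) Ht (sword_app WC WD)) as [l1 [a [l2 [E1 E2]]]].
  { rewrite GCD, <- Ex. auto. }
  rewrite GCD, <- Ex in E2.
  assert (Wl : sword G (l1 ++ a :: l2)) by (rewrite <- E1; apply sword_app; auto).
  assert (Ha : simple G a) by (apply sword_app_inv in Wl; destruct Wl as [_ W]; inversion W; auto).
  assert (Lx : ell G x < ell G y) by auto.
  destruct (split_app E1) as [[D1 [D2 [ED E3]]] | [C1 [C2 [EC E3]]]]; rewrite E3 in E2.
  - (* deletion in D *)
    set (b' := gprod G (D1 ++ D2)).
    assert (Hb' : inWJ G J b').
    { exists (D1 ++ D2). split; auto. subst D. apply Forall_app in FD. destruct FD as [F1 F2]. inversion F2. apply Forall_app; auto. }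
    assert (Exb : x = c ** b') by (rewrite E2, gprod_app, GC; auto).
    destruct (decomp HG HJ Hc Hb') as [U1 U2]. rewrite <- Exb in U1, U2.
    assert (Lx' : ell G x = ell G c + ell G b') by (rewrite Exb; apply (rep_add HG HJ); auto).
    assert (Sbd : step b' d).
    { destruct (del_refl_r D1 D2 Ha) as [t' [Ht' E4]]. rewrite <- ED, GD in E4. rewrite E4. apply step_r; auto.
      rewrite <- E4. fold b'. lia. }
    assert (Px' : phi x = c ** (s ** b')) by (rewrite phi_eq, U1, U2; auto).
    assert (Py' : phi y = c ** (s ** d)) by (rewrite phi_eq; auto).
    assert (Hsb : inWJ G J (s ** b')) by (apply inW_mul; auto; apply inW_gen, HsJ).
    assert (Hsd : inWJ G J (s ** d)) by (apply inW_mul; auto; apply inW_gen, HsJ).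
    destruct (ZL HG Hs Sbd) as [Z|[Z|[Z1 [Z2 Z3]]]].
    + left. rewrite Px', Z. auto.
    + right. split; auto. rewrite Px', Py'. apply step_le. apply liftL; auto.
    + right. split; auto. rewrite Px', Py'.
      eapply le_trans. apply step_le, (liftL Hc Hsb Hb' Z1).
      eapply le_trans. apply step_le, (liftL Hc Hb' Hd Z2).
      apply step_le, (liftL Hc Hd Hsd Z3).
  - (* deletion in C *)
    destruct (BPL HG HJ (n := ell G u) eq_refl Hu Hv HBP (x := y)) as [I1 I2].
    { rewrite Huv. apply Py. }
    fold c in I1. fold d in I2.
    assert (HcA : inWJ G (supp G u) c) by (apply (le_inW HG HA I1); apply (inW_supp HG)).
    assert (HdB : inWJ G (supp G v) d) by (apply (le_inW HG HB I2); apply (inW_supp HG)).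
    assert (FC : Forall (supp G u) C) by (apply (SUPP HG HA HcA WC GC LC)).
    set (p := gprod G (C1 ++ C2)).
    assert (HaA : supp G u a) by (subst C; apply Forall_app in FC; destruct FC as [_ F]; inversion F; auto).
    assert (HpA : inWJ G (supp G u) p).
    { exists (C1 ++ C2). split; auto. subst C. apply Forall_app in FC. destruct FC as [F1 F2]. inversion F2. apply Forall_app; auto. }
    assert (Exp : x = p ** d) by (rewrite E2, app_assoc, gprod_app, GD; auto).
    assert (Spc : step p c).
    { destruct (del_refl_r C1 C2 Ha) as [t' [Ht' E4]]. rewrite <- EC, GC in E4. rewrite E4. apply step_r; auto.
      rewrite <- E4. assert (sword G (C1 ++ C2)) by (subst C; apply sword_app_inv in WC; destruct WC as [W1 W2]; inversion W2; apply sword_app; auto).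
      pose proof (ell_le HG H). fold p in H0 |- *. subst C. rewrite !length_app in LC, H0. simpl in LC. lia. }
    set (m := upJ G J p). set (h := downJ G J p).
    assert (Hm : isrep J m) by (apply up_rep; auto).
    assert (Hh : inWJ G J h) by apply down_in.
    assert (Emh : m ** h = p) by apply up_down.
    assert (Hcomm : s ** h = h ** s).
    { destruct (ell_word HG m) as [M [WM [GM LM]]]. destruct (ell_word HG h) as [Hl [WH [GH LH]]].
      assert (FJ : Forall J Hl) by (apply (SUPP HG HJ Hh WH GH LH)).
      assert (FA : Forall (supp G u) (M ++ Hl)).
      { apply (SUPP HG HA HpA (sword_app WM WH)). rewrite gprod_app, GM, GH; auto.
        rewrite length_app, LM, LH, <- Emh. symmetry. apply (rep_add HG HJ); auto. }
      apply Forall_app in FA. destruct FA as [_ FA].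
      rewrite <- GH. apply commute_s. rewrite Forall_forall in *. intros z Iz. apply AJ; auto. }
    assert (Px' : phi x = p ** s ** d).
    { assert (Exm : x = m ** (h ** d)) by (rewrite Exp, <- Emh, gA; auto).
      assert (Hhd : inWJ G J (h ** d)) by (apply inW_mul; auto).
      destruct (decomp HG HJ Hm Hhd) as [U1 U2]. rewrite <- Exm in U1, U2.
      unfold middle_mult. rewrite U1, U2. rewrite <- Emh. rewrite !gA. f_equal. rewrite <- !gA. f_equal.
      auto. }
    assert (Py' : phi y = c ** s ** d) by auto.
    destruct (ell_sx HG d Hs) as [Dd|Dd].
    +
      assert (ND := noLdesc HdB ltac:(lia)).
      assert (HpsA : inWJ G (supp G u) (p ** s)) by (apply inW_mul; auto; apply inW_gen; apply HsA).
      assert (HcsA : inWJ G (supp G u) (c ** s)) by (apply inW_mul; auto; apply inW_gen; apply HsA).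
      rewrite Px', Py'.
      destruct (ZR HG Hs Spc) as [Z|[Z|[Z1 [Z2 Z3]]]].
      * left. rewrite Z. auto.
      * right. split. apply step_le, liftR; auto. rewrite <- Px', <- Py'; auto.
      * right. split. 2:{ rewrite <- Px', <- Py'; auto. }
        eapply le_trans. apply step_le, (liftR ND HpsA HpA Z1).
        eapply le_trans. apply step_le, (liftR ND HpA HcA Z2).
        apply step_le, (liftR ND HcA HcsA Z3).
    +
      set (h' := s ** d).
      assert (Hh'B : inWJ G (supp G v) h') by (apply inW_mul; auto; apply inW_gen; apply HsB).
      assert (ND := noLdesc Hh'B ltac:(unfold h'; rewrite (sK HG _ Hs); lia)).
      right. split. 2: auto.
      rewrite Px', Py', <- !gA. fold h'. apply step_le, liftR; auto.
Qed.

Lemma main_sm : special_matching G P phi.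
Proof.
  split; [|split; [|split; [|split]]].
  - apply closure.
  - intros; apply phi_invol.
  - intros; apply phi_ne.
  - apply cover_phi.
  - apply special.
Qed.

End Main.

Unset Implicit Arguments.

Theorem proposition6p1 (G : gen_group) (HG : coxeter_system G)
  (w : G) (J : G -> Prop) (s : G)
  (HJ : forall t, J t -> simple G t)
  (HBP : BP_decomposition G J w)
  (Hs : simple G s)
  (Hsupp : forall t, (supp G (upJ G J w) t /\ supp G (downJ G J w) t) <-> t = s) :
  special_matching G (interval G (one G) w) (middle_mult G J s).
Proof. apply main_sm; auto. Qed.
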